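(* Let $\equiv$ be the equivalence relation on $\mathfrak S_n$ generated by the pattern replacements $321\equiv231$ and $312\equiv132$: i.e., for letters $a<b<c$ occupying three consecutive positions of a permutation, one may replace $cba$ by $bca$ (and conversely) and $cab$ by $acb$ (and conversely). Then for $\sigma,\tau\in\mathfrak S_n$, one has $\mathrm{SC}(\sigma^{-1})=\mathrm{SC}(\tau^{-1})$ if and only if $\sigma\equiv\tau$.
   Context: Permutations are words $\sigma_1\cdots\sigma_n$. A word $a_1\cdots a_m$ is initially dominated if $a_1>a_j$ for all $j\ge2$; every permutation factors uniquely as $\sigma=u_1\cdots u_r$ into initially dominated words with increasing first letters, and $\mathrm{SC}(\sigma)=(|u_1|,\ldots,|u_r|)$ is its saillance composition. Pattern replacements act on letters in adjacent positions. *)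

(* Defs.v *)
From Stdlib Require Import Relation_Operators.
From mathcomp Require Import all_boot all_order all_fingroup.
Set Implicit Arguments. Unset Strict Implicit. Unset Printing Implicit Defensive.

Definition perm_word n (s : {perm 'I_n}) : seq nat :=
  [seq nat_of_ord (s i) | i <- enum 'I_n].

Definition init_dominated (u : seq nat) : bool :=
  if u is a :: t then all (fun x => x < a) t else false.

Definition saillance_factorization (w : seq nat) (us : seq (seq nat)) : Prop :=
  flatten us = w /\ all init_dominated us /\ sorted ltn [seq head 0 u | u <- us].

(* SC(w) = c : c is the composition of sizes of the (unique) factorization *)
Definition SC_is (w : seq nat) (c : seq nat) : Prop :=
  exists us, saillance_factorization w us /\ shape us = c.

Inductive repl_step : seq nat -> seq nat -> Prop :=
| step321 p s a b c : a < b -> b < c ->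
    repl_step (p ++ [:: c; b; a] ++ s) (p ++ [:: b; c; a] ++ s)
| step312 p s a b c : a < b -> b < c ->
    repl_step (p ++ [:: c; a; b] ++ s) (p ++ [:: a; c; b] ++ s).

Definition pequiv (w w' : seq nat) : Prop :=
  clos_refl_sym_trans (seq nat) repl_step w w'.

Definition perm_equiv n (s t : {perm 'I_n}) : Prop :=
  pequiv (perm_word s) (perm_word t).

(* Main.v *)
Require Import Defs.
From Stdlib Require Import Relation_Operators.
From mathcomp Require Import all_boot all_order all_fingroup.
From mathcomp Require Import zify.
Set Implicit Arguments. Unset Strict Implicit. Unset Printing Implicit Defensive.

Fixpoint rlm (w : seq nat) : seq nat :=
  match w with
  | [::] => [::]
  | x :: r => if all (fun y => x < y) r then x :: rlm r else rlm r
  end.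

Lemma rlm_sub w x : x \in rlm w -> x \in w.
Proof.
elim: w => [|y r IH] //=.
case: ifP => _; rewrite ?inE; last by move/IH ->; rewrite orbT.
by case/orP => [->|/IH ->] //; rewrite orbT.
Qed.

Lemma rlm_cat p r :
  rlm (p ++ r) = [seq x <- rlm p | all (fun y => x < y) r] ++ rlm r.
Proof.
elim: p => [|x p IH] /=; first by [].
rewrite all_cat; case: (all _ p) => /=.
  by case: (all _ r) => /=; rewrite IH.
by rewrite IH.
Qed.

Lemma pequiv_ctx l r u u' : pequiv u u' -> pequiv (l ++ u ++ r) (l ++ u' ++ r).
Proof.
elim => [x y st| x | x y _ IH | x y z _ IH1 _ IH2].
- apply: rst_step; case: st => p s a b c hab hbc.
  + have E1 : forall t, l ++ (p ++ t ++ s) ++ r = (l ++ p) ++ t ++ (s ++ r).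
      by move=> t; rewrite !catA.
    by rewrite !E1; apply: step321.
  + have E1 : forall t, l ++ (p ++ t ++ s) ++ r = (l ++ p) ++ t ++ (s ++ r).
      by move=> t; rewrite !catA.
    by rewrite !E1; apply: step312.
- exact: rst_refl.
- exact: rst_sym.
- exact: rst_trans IH2.
Qed.

Lemma pequiv_cons x u u' : pequiv u u' -> pequiv (x :: u) (x :: u').
Proof. by move=> h; have := pequiv_ctx [:: x] [::] h; rewrite !cats0. Qed.

Lemma pequiv_rcons x u u' : pequiv u u' -> pequiv (u ++ [:: x]) (u' ++ [:: x]).
Proof. by move=> h; have := pequiv_ctx [::] [:: x] h. Qed.

Lemma step_rlm w w' : repl_step w w' -> rlm w = rlm w'.
Proof.
case=> p s a b c hab hbc; rewrite !rlm_cat.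
- congr (_ ++ _).
    apply: eq_filter => x /=.
    by case: (x < c); case: (x < b).
  rewrite /=.
  have -> : (c < b) = false by lia.
  have -> : (b < a) = false by lia.
  have -> : (c < a) = false by lia.
  by rewrite /= !andbF.
- congr (_ ++ _).
    apply: eq_filter => x /=.
    by case: (x < c); case: (x < a).
  rewrite /=.
  have -> : (c < a) = false by lia.
  have -> : (a < c) = true by lia.
  have -> : (c < b) = false by lia.
  by rewrite hab.
Qed.

Lemma pequiv_rlm w w' : pequiv w w' -> rlm w = rlm w'.
Proof.
elim => [x y st| x | x y _ IH | x y z _ IH1 _ IH2] //.
- exact: step_rlm.
- by rewrite IH1.
Qed.

Lemma move_max m p q : uniq (p ++ q) -> all (fun y => y < m) (p ++ q) ->
  q != [::] -> pequiv (p ++ m :: q) (m :: p ++ q).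
Proof.
elim: p => [|x p IH] /=; first by move=> *; apply: rst_refl.
case/andP=> xn u /andP [xm al] qn.
apply: rst_trans (pequiv_cons x (IH u al qn)) _.
move: xn al; case E: (p ++ q) => [|y rest].
  by move: qn; have := congr1 size E; rewrite size_cat; case: (q) => //= ? ?; lia.
rewrite inE negb_or => /andP [xy _] /andP [ym _].
apply: rst_sym; apply: rst_step.
have: (x < y) || (y < x) by rewrite -neq_ltn.
case/orP => h.
- by apply: (@step312 [::] rest x y m).
- by apply: (@step321 [::] rest y x m).
Qed.

Lemma rlm_last m p : all (fun y => y < m) p -> rlm (p ++ [:: m]) = rlm p ++ [:: m].
Proof.
move=> al; rewrite rlm_cat /=; congr (_ ++ _).
apply/all_filterP; apply/allP => x /rlm_sub hx; rewrite /= andbT.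
exact: (allP al x hx).
Qed.

Lemma rlm_mid m p q : all (fun y => y < m) (p ++ q) -> q != [::] ->
  rlm (p ++ m :: q) = rlm (p ++ q).
Proof.
move=> al qn; rewrite !rlm_cat /=.
have -> : all (fun y => m < y) q = false.
  case: q qn al => [|y q] // _; rewrite all_cat /= => /and3P [_ ym _].
  by apply/negbTE; have -> : (m < y) = false by lia.
congr (_ ++ _); apply: eq_in_filter => x /rlm_sub hx /=.
rewrite all_cat in al; case/andP: al => al _.
by rewrite (allP al x hx).
Qed.

Lemma exists_max (w : seq nat) : w != [::] ->
  exists2 m, m \in w & all (fun y => y <= m) w.
Proof.
elim: w => [|x r IH] // _.
case: r IH => [|y r] IH; first by exists x; rewrite /= ?inE ?eqxx ?leqnn.
have [m mr alm] := IH isT.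
exists (maxn x m).
  by case: (leqP x m) => h; rewrite inE ?mr ?orbT ?eqxx.
apply/allP => z; rewrite inE => /orP [/eqP -> | zr]; first by rewrite leq_maxl.
by rewrite leq_max (allP alm z zr) orbT.
Qed.

Lemma split_facts m p q : uniq (p ++ m :: q) -> all (fun y => y <= m) (p ++ m :: q) ->
  [/\ perm_eq (p ++ m :: q) (m :: p ++ q), uniq (p ++ q) & all (fun y => y < m) (p ++ q)].
Proof.
move=> u al.
have pe1 : perm_eq (p ++ m :: q) (m :: p ++ q) by apply/permPl; exact: perm_catCA p [:: m] q.
move: (u); rewrite (perm_uniq pe1) /= => /andP [mn u'].
split => //; apply/allP => y yin.
have : y <= m by apply: (allP al); rewrite (perm_mem pe1) inE yin orbT.
by rewrite leq_eqVlt => /orP [/eqP ym|//]; move: mn; rewrite -ym yin.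
Qed.

Lemma eq_rlm_pequiv n : forall w w', size w = n -> uniq w -> perm_eq w w' ->
  rlm w = rlm w' -> pequiv w w'.
Proof.
elim: n => [|n IH] w w' sz u pe er.
  move: (perm_size pe); rewrite sz; case: w sz {u pe er} => // _; case: w' => // _.
  exact: rst_refl.
have [m mw alm] : exists2 m, m \in w & all (fun y => y <= m) w.
  by apply: exists_max; case: (w) sz.
have mw' : m \in w' by rewrite -(perm_mem pe).
have u' : uniq w' by rewrite -(perm_uniq pe).
have alm' : all (fun y => y <= m) w'.
  by apply/allP => y yw; apply: (allP alm); rewrite (perm_mem pe).
case/splitPr: mw sz u pe er alm => p q sz u pe er alm.
case/splitPr: mw' u' pe er alm' => p' q' u' pe er alm'.
have [pe1 u1 al1] := split_facts u alm.
have [pe1' u1' al1'] := split_facts u' alm'.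
have pv : perm_eq (p ++ q) (p' ++ q').
  by rewrite -(perm_cons m) (perm_trans (perm_trans _ pe) pe1') // perm_sym.
have szv : size (p ++ q) = n.
  by move: sz; rewrite !size_cat /=; rewrite addnS => [[]].
case: q pe er alm pe1 u1 al1 sz u szv pv => [|y q] pe er alm pe1 u1 al1 sz u szv pv;
case: q' pe er alm' pe1' u1' al1' u' pv => [|y' q'] pe er alm' pe1' u1' al1' u' pv.
- rewrite !cats0 in u1 al1 u1' al1' pv szv.
  rewrite !rlm_last // in er.
  move: er; rewrite !cats1 => /rcons_inj [] er; rewrite -!cats1.
  by apply: pequiv_rcons; apply: IH.
- exfalso; move: er; rewrite cats0 in al1; rewrite rlm_last // rlm_mid // => er.
  have : m \in rlm (p' ++ y' :: q') by rewrite -er mem_cat inE eqxx orbT.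
  by move/rlm_sub; move: u'; rewrite (perm_uniq pe1') /= => /andP [/negP].
- exfalso; move: er; rewrite cats0 in al1'; rewrite rlm_last // rlm_mid // => er.
  have : m \in rlm (p ++ y :: q) by rewrite er mem_cat inE eqxx orbT.
  by move/rlm_sub; move: u; rewrite (perm_uniq pe1) /= => /andP [/negP].
- rewrite (rlm_mid (p:=p) (q:=y::q) al1 isT) (rlm_mid (p:=p') (q:=y'::q') al1' isT) in er.
  apply: rst_trans (move_max (p:=p) (q:=y::q) u1 al1 isT) _.
  have h2 := move_max (p:=p') (q:=y'::q') u1' al1' isT.
  apply: (@rst_trans _ _ _ (m :: p' ++ y' :: q')); last by apply: rst_sym; exact: h2.
  by apply: pequiv_cons; apply: IH.
Qed.


Fixpoint lrmf (b : nat) (x : seq nat) : seq bool :=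
  match x with
  | [::] => [::]
  | a :: t => (b <= a) :: lrmf (maxn b a.+1) t
  end.

Definition mask_of (c : seq nat) : seq bool :=
  flatten [seq true :: nseq k.-1 false | k <- c].

Lemma size_lrmf b x : size (lrmf b x) = size x.
Proof. by elim: x b => [|a t IH] b //=; rewrite IH. Qed.

Lemma nth_lrmf x : forall b i, i < size x ->
  nth false (lrmf b x) i = (b <= nth 0 x i) && all (fun y => y < nth 0 x i) (take i x).
Proof.
elim: x => [|a t IH] b [|i] //=; first by rewrite andbT.
by move=> hi; rewrite IH // geq_max andbA.
Qed.

Lemma lrmf_tail a t r : all (fun y => y < a) t ->
  lrmf a.+1 (t ++ r) = nseq (size t) false ++ lrmf a.+1 r.
Proof.
elim: t => [|y t IH] //= /andP [ya al].
have -> : (a < y) = false by lia.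
have -> : maxn a.+1 y.+1 = a.+1 by lia.
by rewrite IH.
Qed.

Lemma fact_lrmf us : forall b, all init_dominated us ->
  sorted ltn [seq head 0 u | u <- us] ->
  (if us is u :: _ then b <= head 0 u else true) ->
  lrmf b (flatten us) = mask_of (shape us).
Proof.
elim: us => [|u us IH] b //= /andP [du dus] so hb.
case: u du so hb => [|a t] //= du so hb.
have -> : maxn b a.+1 = a.+1 by lia.
rewrite hb lrmf_tail //.
congr (_ :: _); rewrite /mask_of /=; congr (_ ++ _).
apply: IH => //.
  exact: (path_sorted so).
by case: us so {dus} => //= u us /andP [].
Qed.

Fixpoint tw a t := if t is y :: t' then if a < y then [::] else y :: tw a t' else [::].
Fixpoint dw a t := if t is y :: t' then if a < y then t else dw a t' else [::].

Lemma tw_dw a t : tw a t ++ dw a t = t.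
Proof. by elim: t => [|y t IH] //=; case: ifP => //= _; rewrite IH. Qed.

Lemma tw_le a t : all (fun y => y <= a) (tw a t).
Proof. by elim: t => [|y t IH] //=; case: ltnP => //= ->. Qed.

Lemma dw_head a t : (if dw a t is y :: _ then a < y else true).
Proof. by elim: t => [|y t IH] //=; case: ifP. Qed.

Lemma fact_exists N : forall x, size x <= N -> uniq x ->
  exists us, saillance_factorization x us.
Proof.
elim: N => [|N IH] [|a t] //=.
- by move=> _ _; exists [::].
- by move=> _ _; exists [::].
move=> sz /andP [an ut].
have e := tw_dw a t.
have ud : uniq (dw a t) by move: ut; rewrite -{1}e cat_uniq => /and3P [].
have sd : size (dw a t) <= N.
  by move: sz; rewrite -{1}e size_cat; lia.
have [us [fl [di so]]] := IH _ sd ud.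
exists ((a :: tw a t) :: us); split; [|split].
- by rewrite /= fl e.
- rewrite /= di andbT; apply/allP => y yt.
  have : y <= a by apply: (allP (tw_le a t)).
  rewrite leq_eqVlt => /orP [/eqP ya|//].
  by move: an; rewrite -ya -{1}e mem_cat yt.
- rewrite /=; case: us fl di so => [|u us] //= fl /andP [du _] so.
  rewrite so andbT; have := dw_head a t; rewrite -fl.
  by case: (u) du => [|y u'].
Qed.

Lemma nseq_cat_inj i j (l l' : seq bool) : head true l -> head true l' ->
  nseq i false ++ l = nseq j false ++ l' -> i = j /\ l = l'.
Proof.
elim: i j => [|i IH] [|j] //= hl hl'.
- by move=> E; move: hl; rewrite E.
- by move=> E; move: hl'; rewrite -E.
- by case=> /(IH _ hl hl') [-> ->].
Qed.

Lemma mask_head c : head true (mask_of c).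
Proof. by case: c. Qed.

Lemma mask_inj c c' : all (fun k => 0 < k) c -> all (fun k => 0 < k) c' ->
  mask_of c = mask_of c' -> c = c'.
Proof.
elim: c c' => [|k c IH] [|k' c'] //=.
move=> /andP [k0 c0] /andP [k0' c0'] [] /nseq_cat_inj [] //; rewrite ?mask_head //.
move=> ek em; congr (_ :: _); last exact: IH.
lia.
Qed.

Lemma shape_pos us : all init_dominated us -> all (fun k => 0 < k) (shape us).
Proof. by elim: us => [|[|a t] us IH] //= /andP [_ /IH]. Qed.

Lemma SC_equiv x y : uniq x -> uniq y ->
  (exists c, SC_is x c /\ SC_is y c) <-> lrmf 0 x = lrmf 0 y.
Proof.
move=> ux uy; split.
  move=> [c [[us [[fl [di so]] sh]] [us' [[fl' [di' so']] sh']]]].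
  rewrite -fl -fl' !fact_lrmf //; first by rewrite sh sh'.
  - by case: (us').
  - by case: (us).
have [us [fl [di so]]] := fact_exists (leqnn _) ux.
have [us' [fl' [di' so']]] := fact_exists (leqnn _) uy.
have e1 : lrmf 0 x = mask_of (shape us).
  by rewrite -fl; apply: fact_lrmf => //; case: (us).
have e2 : lrmf 0 y = mask_of (shape us').
  by rewrite -fl'; apply: fact_lrmf => //; case: (us').
rewrite e1 e2 => /(mask_inj (shape_pos di) (shape_pos di')) em.
exists (shape us); split; first by exists us.
by exists us'.
Qed.


Lemma mem_rlm w x : uniq w ->
  (x \in rlm w) = (x \in w) && all (fun y => x < y) (drop (index x w).+1 w).
Proof.
elim: w => [|y r IH] //= /andP [yr ur].
rewrite inE; case: (eqVneq x y) => [->|xy] /=.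
  rewrite /= drop0; case: ifP => _; first by rewrite inE eqxx.
  by apply/negbTE; apply: contra yr; apply: rlm_sub.
rewrite -IH //.
by case: ifP => //; rewrite inE (negbTE xy).
Qed.

Lemma rlm_sorted w : sorted ltn (rlm w).
Proof.
elim: w => [|x r IH] //=; case: ifP => // al.
rewrite /= path_min_sorted //.
by apply/allP => y /rlm_sub yr; apply: (allP al).
Qed.

Lemma in_drop_uniq (T : eqType) (s : seq T) x j : uniq s -> x \in s ->
  (x \in drop j s) = (j <= index x s).
Proof.
move=> us xs.
have hd : ~~ has (fun y => y \in take j s) (drop j s).
  by move: us; rewrite -{1}(cat_take_drop j s) cat_uniq => /and3P [].
have : x \in take j s ++ drop j s by rewrite cat_take_drop.
rewrite mem_cat in_take //; case: ltnP => h /=; last by move=> ->.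
move=> _; apply/negP => xd; move/hasP: hd; apply; exists x => //.
by rewrite in_take.
Qed.

Lemma all_take_enum n (P : pred 'I_n) i :
  all P (take i (enum 'I_n)) = [forall k : 'I_n, (k < i) ==> P k].
Proof.
apply/allP/forallP => [h k|h k].
  by apply/implyP => ki; apply: h; rewrite in_take ?mem_enum // index_enum_ord.
rewrite in_take ?mem_enum // index_enum_ord => ki.
exact: (implyP (h k) ki).
Qed.

Lemma all_drop_enum n (P : pred 'I_n) j :
  all P (drop j (enum 'I_n)) = [forall k : 'I_n, (j <= k) ==> P k].
Proof.
apply/allP/forallP => [h k|h k].
  by apply/implyP => ki; apply: h; rewrite in_drop_uniq ?enum_uniq ?mem_enum // index_enum_ord.
rewrite in_drop_uniq ?enum_uniq ?mem_enum // index_enum_ord => ki.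
exact: (implyP (h k) ki).
Qed.

Lemma perm_word_uniq n (s : {perm 'I_n}) : uniq (perm_word s).
Proof.
rewrite /perm_word map_inj_uniq ?enum_uniq //.
by move=> i j /val_inj /perm_inj.
Qed.

Lemma mem_perm_word n (s : {perm 'I_n}) y : (y \in perm_word s) = (y < n).
Proof.
apply/mapP/idP => [[i _ ->] // | h].
by exists (s^-1 (Ordinal h))%g; rewrite ?mem_enum // permKV.
Qed.

Lemma perm_word_perm n (s t : {perm 'I_n}) : perm_eq (perm_word s) (perm_word t).
Proof.
apply: uniq_perm; rewrite ?perm_word_uniq // => y.
by rewrite !mem_perm_word.
Qed.

Lemma size_perm_word n (s : {perm 'I_n}) : size (perm_word s) = n.
Proof. by rewrite size_map size_enum_ord. Qed.

Lemma key n (s : {perm 'I_n}) (i : 'I_n) :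
  nth false (lrmf 0 (perm_word s^-1)) i = (nat_of_ord i \in rlm (perm_word s)).
Proof.
rewrite nth_lrmf ?size_perm_word // mem_rlm ?perm_word_uniq // mem_perm_word ltn_ord /=.
have nx : nth 0 (perm_word s^-1) i = (s^-1)%g i.
  by rewrite /perm_word (nth_map i) ?size_enum_ord // nth_ord_enum.
rewrite nx /perm_word -map_take all_map all_take_enum.
have -> : index (nat_of_ord i) [seq nat_of_ord (s j) | j <- enum 'I_n] = (s^-1)%g i.
  have -> : [seq nat_of_ord (s j) | j <- enum 'I_n] = map val (map s (enum 'I_n)) by elim: (enum 'I_n) => //= a l ->.
  rewrite index_map; last exact: val_inj.
  by rewrite -{1}(permKV s i) index_map ?index_enum_ord //; apply: perm_inj.
rewrite -map_drop all_map all_drop_enum.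
apply/forallP/forallP => /= h k; apply/implyP => hk.
- rewrite ltnNge; apply/negP => ski.
  have ne : s k != i by apply: contraTneq hk => <-; rewrite permK ltnn.
  have lt : s k < i by rewrite ltn_neqAle ski andbT.
  by have := implyP (h (s k)) lt; rewrite permK ltnNge (ltnW hk).
- rewrite ltnNge; apply/negP => ski.
  have ne : (s^-1)%g k != (s^-1)%g i.
    by apply: contraTneq hk => /perm_inj ->; rewrite ltnn.
  have lt : (s^-1)%g i < (s^-1)%g k by rewrite ltn_neqAle eq_sym ne ski.
  by have := implyP (h ((s^-1)%g k)) lt; rewrite permKV ltnNge (ltnW hk).
Qed.

Lemma lrm_rlm n (s t : {perm 'I_n}) :
  lrmf 0 (perm_word s^-1) = lrmf 0 (perm_word t^-1) <-> rlm (perm_word s) = rlm (perm_word t).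
Proof.
split => E.
  apply: (irr_sorted_eq ltn_trans ltnn); rewrite ?rlm_sorted // => y.
  case: (ltnP y n) => hy.
    by rewrite -[y]/(nat_of_ord (Ordinal hy)) -!key E.
  have nin : forall u : {perm 'I_n}, (y \in rlm (perm_word u)) = false.
    by move=> u; apply/negP => /rlm_sub; rewrite mem_perm_word ltnNge hy.
  by rewrite !nin.
apply: (@eq_from_nth _ false); rewrite ?size_lrmf ?size_perm_word // => i hi.
by rewrite -[i]/(nat_of_ord (Ordinal hi)) !key E.
Qed.

Unset Implicit Arguments.
Theorem mainTheorem4 (n : nat) (s t : {perm 'I_n}) :
  (exists c, SC_is (perm_word s^-1) c /\ SC_is (perm_word t^-1) c)
  <-> perm_equiv s t.
Proof.
rewrite SC_equiv ?perm_word_uniq // lrm_rlm /perm_equiv; split.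
  by move=> E; apply: (@eq_rlm_pequiv n); rewrite ?size_perm_word ?perm_word_uniq ?perm_word_perm.
exact: pequiv_rlm.
Qed.
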